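(* Let $n\ge3$ and $k>n$ be integers and let $X$ be the discrete-time Markov chain on $\mathbb{N}^{n-1}$ described in the context (which is then stable). If $\mathbf{Q}$ is a random vector distributed according to the stationary distribution of $X$, then $\mathbb{E}[|\mathbf{Q}|]<\infty$.
   Context: $\mathbb{N}=\{0,1,2,\dots\}$, $|\mathbf{x}|=x_1+\dots+x_{n-1}$. $\mathbf{0}$, $\mathbf{1}$ are the all-zero and all-one vectors of dimension $n-1$, $\mathbf{e}_l$ the $l$-th unit vector. For $j=0,\dots,n-1$, $R_j$ is the set of $\mathbf{x}\in\mathbb{N}^{n-1}$ with exactly $j$ zero entries. $X$ is the Markov chain on $\mathbb{N}^{n-1}$ with nonzero transition probabilities: from $\mathbf{x}\in R_0$, to $\mathbf{x}-\mathbf{1}$ w.p. $\frac{k-(n-1)}{k}$ and to $\mathbf{x}+\mathbf{e}_l$ w.p. $\frac1k$ ($l=1,\dots,n-1$); from $\mathbf{x}\in R_j$, $1\le j\le n-2$, to $\mathbf{x}+\mathbf{e}_l$ w.p. $\frac{k-(n-1-j)}{kj}$ if $x_l=0$ and w.p. $\frac1k$ if $x_l\ge1$; from $\mathbf{0}$ to $\mathbf{e}_l$ w.p. $\frac1{n-1}$. *)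

(* Defs.v *)
From HB Require Import structures.
From mathcomp Require Import all_boot all_order all_algebra.
From mathcomp Require Import all_classical all_reals.
From mathcomp Require Import ereal esum.
Unset Implicit Arguments. Unset Printing Implicit Defensive.
Import Order.TTheory GRing.Theory Num.Theory.
Local Open Scope ring_scope.

Definition state (n : nat) := {ffun 'I_n.-1 -> nat}.

Definition vnorm n (x : state n) : nat := (\sum_(l < n.-1) x l)%N.

(* number of zero entries: x is in R_j iff nzeros x = j *)
Definition nzeros n (x : state n) : nat := #|[set l : 'I_n.-1 | x l == 0%N]|.

(* x - 1 (only used for x in R_0) *)
Definition vdec n (x : state n) : state n := [ffun i => (x i).-1].

Definition vinc n (x : state n) (l : 'I_n.-1) : state n :=
  [ffun i => (x i + (i == l))%N].

Definition up_prob (R : realType) (n k : nat) (x : state n) (l : 'I_n.-1) : R :=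
  let j := nzeros n x in
  if j == n.-1 then 1 / (n.-1)%:R            (* x = 0 *)
  else if j == 0%N then 1 / k%:R              (* x in R_0 *)
  else if x l == 0%N then (k%:R - ((n.-1)%:R - j%:R)) / (k%:R * j%:R)
  else 1 / k%:R.

Definition trans (R : realType) (n k : nat) (x y : state n) : R :=
  (if (nzeros n x == 0%N) && (y == vdec n x)
   then (k%:R - (n.-1)%:R) / k%:R else 0)
  + \sum_(l < n.-1) (if y == vinc n x l then up_prob R n k x l else 0).

Definition stationary_distribution (R : realType) (n k : nat)
    (pi : state n -> R) : Prop :=
  (forall x, 0 <= pi x) /\
  (\esum_(x in [set: state n]) (pi x)%:E = 1%E) /\
  (forall y, (pi y)%:E = \esum_(x in [set: state n]) (pi x * trans R n k x y)%:E).

(* Main.v *)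
Require Import Defs.
From HB Require Import structures.
From mathcomp Require Import all_boot all_order all_algebra.
From mathcomp Require Import all_classical all_reals.
From mathcomp Require Import ereal esum.
From mathcomp Require Import ring lra zify.
Import Order.TTheory GRing.Theory Num.Theory.
Local Open Scope ring_scope.

Section Weights.
Variables (R : realType) (n k : nat).
Hypotheses (hn : (3 <= n)%N) (hk : (n < k)%N).
Local Notation d := n.-1.

Definition w0 (x : state n) : R :=
  if nzeros n x == 0%N then (k%:R - d%:R) / k%:R else 0.

Lemma sum_if0 (x : state n) (A B : R) :
  \sum_(l < d) (if x l == 0%N then A else B) = A *+ nzeros n x + B *+ (d - nzeros n x).
Proof.
rewrite (bigID (fun l => x l == 0%N)) /=.
rewrite (eq_bigr (fun=> A)); last by move=> l ->.
rewrite [X in _ + X](eq_bigr (fun=> B)); last by move=> l /negbTE ->.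
rewrite !sumr_const /nzeros cardsE; congr (_ + _ *+ _).
have := cardC (fun l : 'I_d => x l == 0%N).
rewrite [X in _ = X]card_ord => E.
have -> : #|(fun l : 'I_d => x l != 0%N)| = #|[predC (fun l : 'I_d => x l == 0%N)]| by apply: eq_card.
apply: (@addnI #|(fun l : 'I_d => x l == 0%N)|). rewrite E subnKC //. by rewrite -[X in (_ <= X)%N](card_ord d) max_card.
Qed.

Lemma nzeros_le (x : state n) : (nzeros n x <= d)%N.
Proof. by rewrite /nzeros -[X in (_ <= X)%N]card_ord max_card. Qed.

Lemma nzeros_lt (x : state n) l : x l != 0%N -> (nzeros n x < d)%N.
Proof.
move=> xl; rewrite /nzeros.
have := cardsC [set l : 'I_d | x l == 0%N]; rewrite [X in _ = X]card_ord => E.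
suff : (0 < #|~: [set l : 'I_d | x l == 0%N]|)%N by lia.
rewrite card_gt0; apply/set0Pn; exists l.
by rewrite !inE.
Qed.

Lemma nzeros0 (x : state n) l : nzeros n x = 0%N -> x l != 0%N.
Proof.
move=> /eqP; rewrite /nzeros cards_eq0 => /eqP H.
apply/negP => xl; have : l \in [set l : 'I_d | x l == 0%N] by rewrite inE.
by rewrite H inE.
Qed.

Lemma d_ge2 : (2 <= d)%N. Proof. by case: n hn => // -[]. Qed.
Lemma dk : (d.+2 <= k)%N. Proof. by case: n hn hk => //. Qed.

Lemma k_gt0 : 0 < k%:R :> R.
Proof. rewrite ltr0n; have := dk; lia. Qed.

Lemma w0_ge0 x : 0 <= w0 x.
Proof.
rewrite /w0; case: ifP => // _; apply: divr_ge0; last by rewrite ler0n.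
rewrite subr_ge0 ler_nat; have := dk; lia.
Qed.

Lemma wl_ge0 x l : 0 <= up_prob R n k x l.
Proof.
have kp := k_gt0.
rewrite /up_prob; case: ifP => _; first by rewrite divr_ge0 ?ler0n.
case: ifP => _; first by rewrite divr_ge0 ?ler0n.
case: ifP => _; last by rewrite divr_ge0 ?ler0n.
apply: divr_ge0; last by rewrite mulr_ge0 ?ler0n.
have := nzeros_le x; have := dk.
rewrite subr_ge0 lerBlDr -natrD ler_nat; lia.
Qed.

Lemma wsum x : w0 x + \sum_(l < d) up_prob R n k x l = 1.
Proof.
have kp := k_gt0; have d2 := d_ge2.
rewrite /w0 /up_prob.
have [/eqP E|E] := boolP (nzeros n x == d).
  rewrite E (_ : (d == 0%N) = false); last by apply/negbTE; lia.
  rewrite sumr_const card_ord add0r -[_ *+ d]mulr_natr mul1r mulVf //.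
  by rewrite pnatr_eq0; lia.
idtac.
have [/eqP Z|Z] := boolP (nzeros n x == 0%N).
  rewrite sumr_const card_ord -[1 / k%:R *+ d]mulr_natr.
  have k0 : (k%:R : R) != 0 by rewrite lt0r_neq0.
  by field.
rewrite add0r sum_if0.
have jd := nzeros_le x.
rewrite -[_ *+ nzeros n x]mulr_natr -[_ *+ (d - _)]mulr_natr natrB //.
move: Z E jd; set j := nzeros n x => Z E jd.
have j0 : (j%:R : R) != 0 by rewrite pnatr_eq0.
have k0 : (k%:R : R) != 0 by rewrite lt0r_neq0.
by field; rewrite k0 j0.
Qed.

Lemma wlx x l : up_prob R n k x l * (x l)%:R = (x l)%:R / k%:R.
Proof.
have [->|xl] := eqVneq (x l) 0%N; first by rewrite !mulr0 mul0r.
have := @nzeros_lt x l xl => lt.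
rewrite /up_prob (_ : (nzeros n x == d) = false); last by apply/negbTE; lia.
rewrite (negbTE xl); case: ifP => _; by rewrite mul1r mulrC.
Qed.

Lemma w0_pos x l : w0 x != 0 -> (0 < x l)%N.
Proof.
rewrite /w0; case: ifP => [/eqP Z _|]; last by rewrite eqxx.
by have := @nzeros0 x l Z; rewrite lt0n.
Qed.

End Weights.

Lemma sumsq_diff (R : realType) (m : nat) (a : 'I_m -> R) :
  \sum_(i < m) \sum_(j < m) (a i - a j) ^+ 2 =
  (m%:R * \sum_(i < m) a i ^+ 2) *+ 2 - (\sum_(i < m) a i) ^+ 2 *+ 2.
Proof.
have inner i : \sum_(j < m) (a i - a j) ^+ 2 =
    a i ^+ 2 *+ m - (a i * \sum_(j < m) a j) *+ 2 + \sum_(j < m) a j ^+ 2.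
  under eq_bigr do rewrite sqrrB.
  by rewrite big_split /= sumrB sumr_const card_ord mulr_sumr sumrMnl.
under eq_bigr do rewrite inner.
rewrite big_split /= sumrB !sumrMnl sumr_const card_ord -mulr_suml.
ring.
Qed.

Section V.
Variables (R : realType) (n k : nat).
Local Notation d := n.-1.

Definition xr (x : state n) (l : 'I_d) : R := (x l)%:R.
Definition sR (x : state n) : R := (vnorm n x)%:R.
Definition Qs (x : state n) : R := \sum_(l < d) xr x l ^+ 2.
Definition V0 (x : state n) : R := d.+1%:R * Qs x - sR x ^+ 2.

Lemma sRE x : sR x = \sum_(l < d) xr x l.
Proof. by rewrite /sR /vnorm natr_sum. Qed.

Lemma sR_ge0 x : 0 <= sR x.
Proof. by rewrite ler0n. Qed.

Lemma Qs_ge0 x : 0 <= Qs x.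
Proof. by apply: sumr_ge0 => i _; rewrite sqr_ge0. Qed.

Lemma V0_ge0 x : 0 <= V0 x.
Proof.
have := @sumsq_diff R d (xr x).
have : 0 <= \sum_(i < d) \sum_(j < d) (xr x i - xr x j) ^+ 2.
  by do 2 (apply: sumr_ge0 => ? _); rewrite sqr_ge0.
move=> h1 h2; rewrite h2 -sRE -/(Qs x) in h1.
have := Qs_ge0 x; rewrite /V0 -addn1 natrD.
nra.
Qed.

Lemma xr_inc x l i : xr (vinc n x l) i = xr x i + (i == l)%:R.
Proof. by rewrite /xr ffunE natrD. Qed.

Lemma sum_inc (F : R -> R) x l :
  \sum_(i < d) F (xr (vinc n x l) i) = \sum_(i < d) F (xr x i) - F (xr x l) + F (xr x l + 1).
Proof.
rewrite (bigD1 l) //= [in RHS](bigD1 l) //= xr_inc eqxx.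
rewrite (eq_bigr (fun i => F (xr x i))); last first.
  by move=> i /negbTE il; rewrite xr_inc il addr0.
ring.
Qed.

Lemma sR_inc x l : sR (vinc n x l) = sR x + 1.
Proof. rewrite !sRE (sum_inc id); ring. Qed.

Lemma Qs_inc x l : Qs (vinc n x l) = Qs x + 2 * xr x l + 1.
Proof. rewrite /Qs (sum_inc (fun t => t ^+ 2)); ring. Qed.

Lemma V0_inc x l : V0 (vinc n x l) = V0 x + 2 * d.+1%:R * xr x l - 2 * sR x + d%:R.
Proof. rewrite /V0 Qs_inc sR_inc -addn1 natrD; ring. Qed.

Lemma xr_dec (x : state n) (i : 'I_d) : (0 < x i)%N -> xr (vdec n x) i = xr x i - 1.
Proof. by move=> h; rewrite /xr ffunE -(prednK h) /= -addn1 natrD addrK. Qed.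

Lemma V0_dec (x : state n) : (forall i, 0 < x i)%N -> V0 (vdec n x) = V0 x - 2 * sR x + d%:R.
Proof.
move=> h.
have eS : sR (vdec n x) = sR x - d%:R.
  rewrite !sRE (eq_bigr (fun i => xr x i - 1)); last by move=> i _; rewrite xr_dec.
  by rewrite sumrB sumr_const card_ord.
have eQ : Qs (vdec n x) = Qs x - 2 * sR x + d%:R.
  rewrite /Qs sRE (eq_bigr (fun i => xr x i ^+ 2 - 2 * xr x i + 1)); last first.
    by move=> i _; rewrite xr_dec //; ring.
  rewrite big_split /= sumrB sumr_const card_ord -mulr_sumr; ring.
rewrite /V0 eS eQ -addn1 natrD; ring.
Qed.

End V.

Section Drift.
Variables (R : realType) (n k : nat).
Hypotheses (hn : (3 <= n)%N) (hk : (n < k)%N).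
Local Notation d := n.-1.

Definition Pop (g : state n -> R) (x : state n) : R :=
  w0 R n k x * g (vdec n x) + \sum_(l < d) up_prob R n k x l * g (vinc n x l).

Lemma Pop_le (f g : state n -> R) x : (forall y, f y <= g y) -> Pop f x <= Pop g x.
Proof.
move=> fg; rewrite /Pop lerD //.
  by rewrite ler_wpM2l // w0_ge0.
by apply: ler_sum => l _; rewrite ler_wpM2l // wl_ge0.
Qed.

Lemma Pop_cst (c : R) x : Pop (fun=> c) x = c.
Proof.
by rewrite /Pop -mulr_suml -mulrDl wsum // mul1r.
Qed.

Lemma Pop_scale (c : R) g x : Pop (fun y => c * g y) x = c * Pop g x.
Proof.
rewrite /Pop mulrDr mulr_sumr; congr (_ + _); first by rewrite mulrCA.
by apply: eq_bigr => l _; rewrite mulrCA.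
Qed.

Lemma Pop_V0 x :
  Pop (V0 R n) x = V0 R n x - 2 * sR R n x + d%:R + 2 * d.+1%:R * sR R n x / k%:R.
Proof.
rewrite /Pop.
have -> : w0 R n k x * V0 R n (vdec n x) = w0 R n k x * (V0 R n x - 2 * sR R n x + d%:R).
  have [->|h] := eqVneq (w0 R n k x) 0; first by rewrite !mul0r.
  by rewrite V0_dec // => i; apply: w0_pos h.
rewrite (eq_bigr (fun l => up_prob R n k x l * (V0 R n x - 2 * sR R n x + d%:R)
   + 2 * d.+1%:R * (up_prob R n k x l * xr R n x l))); last first.
  by move=> l _; rewrite V0_inc; ring.
rewrite big_split /= -mulr_suml -mulr_sumr.
rewrite [\sum_(i < d) up_prob R n k x i * xr R n x i](eq_bigr (fun l => xr R n x l / k%:R)); last by move=> l _; rewrite /xr wlx.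
rewrite -mulr_suml -sRE addrA -mulrDl wsum // mul1r; ring.
Qed.

Definition Vk (x : state n) : R := k%:R / 2 * V0 R n x.
Definition B : R := k%:R / 2 * d%:R.

Lemma Vk_ge0 x : 0 <= Vk x.
Proof. by rewrite /Vk mulr_ge0 ?V0_ge0 // divr_ge0 ?ler0n. Qed.

Lemma B_ge0 : 0 <= B.
Proof. by rewrite /B mulr_ge0 ?ler0n // divr_ge0 ?ler0n. Qed.

Lemma drift x : Pop Vk x <= Vk x + B - sR R n x.
Proof.
rewrite /Vk Pop_scale Pop_V0 /B.
have kp : 0 < k%:R :> R by apply: (@k_gt0 R n k)...
have dk : (d.+2 <= k)%N by apply: (@dk n k)...
have kd : d%:R + 2 <= k%:R :> R by rewrite -natrD addn2 ler_nat.
have s0 := sR_ge0 R n x.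
rewrite (_ : d.+1%:R = d%:R + 1); last by rewrite -addn1 natrD.
set K := k%:R in kp kd *; set D := d%:R in kd *; set S := sR R n x in s0 *.
set V := V0 R n x.
have -> : K / 2 * (V - 2 * S + D + 2 * (D + 1) * S / K) = K / 2 * V + K / 2 * D - S - (K - D - 2) * S.
  by field; rewrite lt0r_neq0.
have : 0 <= (K - D - 2) * S by rewrite mulr_ge0 //; lra.
lra.
Qed.

Definition gM (M : R) (x : state n) : R := Num.min (Vk x) M.

Lemma drift_point (M : R) x : 0 <= M ->
  Pop (gM M) x + (if Vk x <= M then sR R n x else 0) <= gM M x + B.
Proof.
move=> M0.
have h1 : Pop (gM M) x <= Pop Vk x by apply: Pop_le => y; rewrite /gM ge_min lexx.
have h2 : Pop (gM M) x <= M.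
  by rewrite -[X in _ <= X](Pop_cst M x); apply: Pop_le => y; rewrite /gM ge_min lexx orbT.
have := drift x; have := B_ge0.
case: (lerP (Vk x) M) => h.
  rewrite [gM M x]/gM min_l // => hB hd.
  apply: (le_trans (y := Pop Vk x + sR R n x)); first by rewrite lerD2r.
  by rewrite -lerBrDr.
rewrite [gM M x]/gM min_r; last exact: ltW h.
move=> hB hd.
rewrite addr0; apply: (le_trans h2); rewrite lerDl; exact: hB.
Qed.

End Drift.
Section EsumLemmas.
Local Open Scope classical_set_scope.

Lemma esumZl (R : realType) (T : choiceType) (S : set T) (r : R) (a : T -> \bar R) :
  0 <= r -> (forall i, (0 <= a i)%E) ->
  (\esum_(i in S) (r%:E * a i) = r%:E * \esum_(i in S) a i)%E.
Proof.
move=> r0 a0; rewrite /esum -ereal_supZl //; last first.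
  apply/set0P; exists (\sum_(x \in set0) a x)%E; exists set0 => //; exact: fsets_set0.
congr ereal_sup; apply/seteqP; split => y /=.
  move=> [X HX <-]; exists (\sum_(x \in X) a x)%E; first by exists X.
  by rewrite ge0_mule_fsumr.
move=> [_ [X HX <-] <-]; exists X => //.
by rewrite ge0_mule_fsumr.
Qed.

Lemma esum_delta (R : realType) (T : choiceType) (z : T) (e : \bar R) :
  (0 <= e)%E -> (\esum_(y in [set: T]) (if y == z then e else 0) = e)%E.
Proof.
move=> e0; rewrite (esumID [set z]); last by move=> i _; case: ifP.
rewrite setTI esum_set1 ?eqxx // esum1 ?adde0 // => y [_ /= yz].
by rewrite ifN //; apply/eqP.
Qed.

Lemma esum_swap (R : realType) (T1 T2 : choiceType) (a : T1 -> T2 -> \bar R) :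
  (forall i j, (0 <= a i j)%E) ->
  (\esum_(i in [set: T1]) \esum_(j in [set: T2]) a i j =
   \esum_(j in [set: T2]) \esum_(i in [set: T1]) a i j)%E.
Proof.
move=> a0.
rewrite (esum_esum (J := fun _ => [set: T2])) //.
rewrite (esum_esum (J := fun _ => [set: T1])) //.
rewrite (reindex_esum ([set: T2] `*`` fun=> [set: T1]) _ (fun x => (x.2, x.1))) //.
split => //=.
- by move=> [i1 i2] [j1 j2] /= _ _ [] -> ->.
- by move=> [i1 i2] _ /=; exists (i2, i1).
Qed.

End EsumLemmas.

Section Main.
Local Open Scope classical_set_scope.
Variables (R : realType) (n k : nat).
Hypotheses (hn : (3 <= n)%N) (hk : (n < k)%N).
Local Notation d := n.-1.
Let w0g x : 0 <= w0 R n k x := w0_ge0 R n k hn hk x.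
Let wlg x l : 0 <= up_prob R n k x l := wl_ge0 R n k hn hk x l.

Lemma trans_eq (x y : state n) : trans R n k x y =
  (if y == vdec n x then w0 R n k x else 0) +
  \sum_(l < d) (if y == vinc n x l then up_prob R n k x l else 0).
Proof.
rewrite /trans /w0; case: (nzeros n x == 0%N) => /=; by case: (y == vdec n x).
Qed.

Lemma trans_ge0 x y : 0 <= trans R n k x y.
Proof.
rewrite trans_eq; apply: addr_ge0.
  by case: ifP => // _; apply: w0g.
by apply: sumr_ge0 => l _; case: ifP => // _; apply: wlg.
Qed.

Lemma Pop_ge0 (g : state n -> R) x : (forall y, 0 <= g y) -> 0 <= Pop R n k g x.
Proof.
move=> g0; rewrite -(Pop_cst R n k hn hk 0 x); exact: Pop_le.
Qed.

Variable pi : state n -> R.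
Hypothesis hpi : stationary_distribution R n k pi.

Lemma pi_ge0 x : 0 <= pi x.
Proof. by case: hpi. Qed.

Lemma esum_row (g : state n -> R) x : (forall y, 0 <= g y) ->
  (\esum_(y in [set: state n]) (pi x * trans R n k x y * g y)%:E = (pi x * Pop R n k g x)%:E)%E.
Proof.
move=> g0.
have p0 := pi_ge0 x.
have E y : pi x * trans R n k x y * g y =
   (if y == vdec n x then pi x * w0 R n k x * g (vdec n x) else 0) +
   \sum_(l < d) (if y == vinc n x l then pi x * up_prob R n k x l * g (vinc n x l) else 0).
  rewrite trans_eq mulrDr mulrDl mulr_sumr mulr_suml; congr (_ + _).
    by case: eqP => [->|_]; rewrite ?mulr0 ?mul0r.
  by apply: eq_bigr => l _; case: eqP => [->|_]; rewrite ?mulr0 ?mul0r.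
under eq_esum do rewrite E EFinD -sumEFin.
rewrite esumD; last 2 first.
- by move=> y _; case: ifP => // _; rewrite lee_fin !mulr_ge0 ?w0g.
- move=> y _; rewrite sume_ge0 // => l _; case: ifP => // _.
  by rewrite lee_fin !mulr_ge0 ?wlg.
rewrite esum_sum; last first.
  by move=> y l _ _; case: ifP => // _; rewrite lee_fin !mulr_ge0 ?wlg.
under eq_esum do rewrite (fun_if EFin).
rewrite esum_delta; last by rewrite lee_fin !mulr_ge0 ?w0g.
under eq_bigr do (under eq_esum do rewrite (fun_if EFin); rewrite esum_delta; last by rewrite lee_fin !mulr_ge0 ?wlg).
rewrite sumEFin -EFinD /Pop mulrDr mulr_sumr mulrA; congr (_ + _)%:E.
by apply: eq_bigr => l _; rewrite mulrA.
Qed.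

Lemma invariance (g : state n -> R) : (forall y, 0 <= g y) ->
  (\esum_(y in [set: state n]) (pi y * g y)%:E =
   \esum_(x in [set: state n]) (pi x * Pop R n k g x)%:E)%E.
Proof.
move=> g0.
transitivity (\esum_(y in [set: state n]) \esum_(x in [set: state n])
   (pi x * trans R n k x y * g y)%:E)%E.
  apply: eq_esum => y _.
  case: hpi => _ [_ st].
  rewrite EFinM st muleC -esumZl //; last first.
    by move=> x; rewrite lee_fin mulr_ge0 ?pi_ge0 ?trans_ge0.
  by apply: eq_esum => x _; rewrite -EFinM mulrC.
rewrite esum_swap; last first.
  by move=> y x; rewrite lee_fin !mulr_ge0 ?pi_ge0 ?trans_ge0.
by apply: eq_esum => x _; rewrite esum_row.
Qed.

Lemma pi_sum1 : (\esum_(x in [set: state n]) (pi x)%:E = 1)%E.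
Proof. by case: hpi => _ []. Qed.

Lemma esum_cst (c : R) : 0 <= c ->
  (\esum_(x in [set: state n]) (pi x * c)%:E = c%:E)%E.
Proof.
move=> c0.
under eq_esum do rewrite EFinM muleC.
by rewrite esumZl ?pi_sum1 ?mule1 // => x; rewrite lee_fin pi_ge0.
Qed.

Definition ind (M : R) (x : state n) : R :=
  if Vk R n k x <= M then sR R n x else 0.

Lemma ind_ge0 M x : 0 <= ind M x.
Proof. by rewrite /ind; case: ifP => // _; apply: sR_ge0. Qed.

Lemma gM_ge0 M x : 0 <= M -> 0 <= gM R n k M x.
Proof. by move=> M0; rewrite /gM le_min M0 Vk_ge0. Qed.

Lemma trunc_bound (M : R) : 0 <= M ->
  (\esum_(x in [set: state n]) (pi x * ind M x)%:E <= (B R n k)%:E)%E.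
Proof.
move=> M0.
set G := (\esum_(x in [set: state n]) (pi x * gM R n k M x)%:E)%E.
have G0 : (0 <= G)%E.
  by apply: esum_ge0 => x _; rewrite lee_fin mulr_ge0 ?pi_ge0 ?gM_ge0.
have GM : (G <= M%:E)%E.
  rewrite -(esum_cst M M0); apply: le_esum => x _.
  by rewrite lee_fin ler_wpM2l ?pi_ge0 // /gM ge_min lexx orbT.
have Gfin : G \is a fin_num.
  by rewrite ge0_fin_numE // (le_lt_trans GM) // ltry.
have H : (G + \esum_(x in [set: state n]) (pi x * ind M x)%:E <= G + (B R n k)%:E)%E.
  rewrite [X in (X + _)%E](invariance _ (fun y => gM_ge0 M y M0)).
  rewrite -esumD; last 2 first.
  - by move=> x _; rewrite lee_fin mulr_ge0 ?pi_ge0 ?Pop_ge0 // => y; exact: gM_ge0 M y M0.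
  - by move=> x _; rewrite lee_fin mulr_ge0 ?pi_ge0 ?ind_ge0.
  rewrite -(esum_cst _ (B_ge0 R n k)) -esumD; last 2 first.
  - by move=> x _; rewrite lee_fin mulr_ge0 ?pi_ge0 ?gM_ge0.
  - by move=> x _; rewrite lee_fin mulr_ge0 ?pi_ge0 ?B_ge0.
  apply: le_esum => x _; rewrite -!EFinD lee_fin -!mulrDr ler_wpM2l ?pi_ge0 //.
  exact: (drift_point R n k hn hk M x M0).
by rewrite leeD2lE in H.
Qed.

End Main.



Theorem proposition8p2 (R : realType) (n k : nat) (hn : (3 <= n)%N) (hk : (n < k)%N)
    (pi : state n -> R) :
  stationary_distribution R n k pi ->
  (\esum_(x in [set: state n]) (pi x * (vnorm n x)%:R)%:E < +oo)%E.
Proof.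
move=> hpi.
apply: (@le_lt_trans _ _ (B R n k)%:E); last exact: ltry.
rewrite /esum; apply: ge_ereal_sup => _ [X [finX _] <-].
pose M := (\sum_(y \in X) Vk R n k y)%R.
have M0 : 0 <= M by apply: fsumr_ge0 => y _; apply: Vk_ge0.
have VM y : X y -> Vk R n k y <= M.
  move=> Xy; rewrite /M (fsbigD1 y) //= lerDl.
  by apply: fsumr_ge0 => z _; apply: Vk_ge0.
apply: (le_trans _ (trunc_bound R n k hn hk pi hpi M M0)).
apply: esum_ge; exists X => //.
rewrite (eq_fsbigr (fun y => (pi y * ind R n k M y)%:E)) // => y /[!inE] Xy.
by rewrite /ind VM.
Qed.
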